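(* Let $M\ge1$ be an integer and for $j=0,\ldots,M-1$ let $f_j:\mathbb{Z}_M\to\mathbb{Z}_2$ be the Grover function $f_j(x)=\delta_{xj}$. Then the standard oracle operators $U_{f_0},\ldots,U_{f_{M-1}}$ are unambiguously distinguishable; indeed the matrix $\Gamma$ with $\Gamma_{j'j}=\#\{x\in\mathbb{Z}_M: f_{j'}(x)=f_j(x)\}$ satisfies $\det\Gamma=2^{M-1}[(M-1)^2+1]>0$.
   Context: Let $\mathcal{H}_M,\mathcal{H}_2$ be Hilbert spaces with orthonormal computational bases $\{|x\rangle\}_{x\in\mathbb{Z}_M}$, $\{|y\rangle\}_{y\in\mathbb{Z}_2}$. For $f:\mathbb{Z}_M\to\mathbb{Z}_2$ the standard oracle operator is the unitary $U_f$ on $\mathcal{H}_M\otimes\mathcal{H}_2$ with $U_f|x\rangle\otimes|y\rangle=|x\rangle\otimes|y\oplus f(x)\rangle$, $\oplus$ being addition mod 2. A finite list of unitary operators $W_1,\ldots,W_K$ on a finite-dimensional Hilbert space $\mathcal{H}$ is called unambiguously distinguishable if there exist a finite-dimensional ancilla space $\mathcal{H}_A$ and a unit vector $|\psi\rangle\in\mathcal{H}\otimes\mathcal{H}_A$ such that the vectors $(W_j\otimes\mathbb{1}_A)|\psi\rangle$ are linearly independent. *)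

(* Defs.v *)
(* Finite-dimensional Hilbert spaces C^n over a numeric
   algebraically closed field C (e.g. algC, or complex R for R : rcfType). *)
From HB Require Import structures.
From mathcomp Require Import all_boot all_order all_algebra.
From mathcomp Require Export mxtens.
Set Implicit Arguments. Unset Strict Implicit. Unset Printing Implicit Defensive.
Import Order.TTheory GRing.Theory Num.Theory.
Local Open Scope ring_scope.

Section Defs.
Variable C : numClosedFieldType.

Definition adjmx {m n} (A : 'M[C]_(m, n)) : 'M[C]_(n, m) := (map_mx Num.conj A)^T.

Definition unitary_mx {n} (U : 'M[C]_n) : Prop :=
  U *m adjmx U = 1%:M /\ adjmx U *m U = 1%:M.

Definition unit_vec {n} (v : 'cV[C]_n) : Prop := \sum_(i < n) `|v i 0| ^+ 2 = 1.

Definition lin_indep {K n} (v : 'I_K -> 'cV[C]_n) : Prop :=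
  row_free (\matrix_(j < K) (v j)^T).

(* The tensor product
   C^n (x) C^d is C^(n*d) via the Kronecker product [tensmx]. *)
Definition unamb_dist {K n} (W : 'I_K -> 'M[C]_n) : Prop :=
  (forall j, unitary_mx (W j)) /\
  exists (d : nat) (psi : 'cV[C]_(n * d)),
    unit_vec psi /\ lin_indep (fun j => (tensmx (W j) (1%:M : 'M[C]_d)) *m psi).

Definition ket2 {M} (x : 'I_M) (y : 'I_2) : 'cV[C]_(M * 2) :=
  delta_mx (mxtens_index (x, y)) 0.

(* standard oracle U_f |x>|y> = |x>|y (+) f x> *)
Definition oracle {M} (f : 'I_M -> 'I_2) : 'M[C]_(M * 2) :=
  \sum_(x < M) \sum_(y < 2)
     delta_mx (mxtens_index (x, (y + f x)%R)) (mxtens_index (x, y)).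
End Defs.

Definition grover {M} (j : 'I_M) : 'I_M -> 'I_2 :=
  fun x => if x == j then 1%R else 0%R.

Definition gram_count {K M} (f : 'I_K -> 'I_M -> 'I_2) : 'M[int]_K :=
  \matrix_(j', j) (#|[set x | f j' x == f j x]|)%:Z.

(* Main.v *)
Require Import Defs.
From HB Require Import structures.
From mathcomp Require Import all_boot all_order all_algebra.
From mathcomp Require Import ring.
Import Order.TTheory GRing.Theory Num.Theory.
Local Open Scope ring_scope.



Section Orc.
Variables (C : numClosedFieldType) (M : nat) (f : 'I_M -> 'I_2).

Definition sw (k : 'I_(M * 2)) : 'I_(M * 2) :=
  mxtens_index ((mxtens_unindex k).1, (mxtens_unindex k).2 + f (mxtens_unindex k).1).

Lemma add2K (z : 'I_2) : z + z = 0.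
Proof. by apply/val_inj; case: z => [[|[|]]]. Qed.

Lemma swK : involutive sw.
Proof.
move=> k; case: (mxtens_indexP k) => x y.
by rewrite /sw !mxtens_indexK /= -addrA add2K addr0.
Qed.

Lemma idx_eq (a b : 'I_M * 'I_2) : (mxtens_index a == mxtens_index b) = (a == b).
Proof. exact: (inj_eq (can_inj (@mxtens_indexK M 2))). Qed.

Lemma oracleE a b : oracle C f a b = (a == sw b)%:R.
Proof.
rewrite /oracle summxE; case: (mxtens_indexP b) => x0 y0.
rewrite (bigD1 x0) //= [X in _ + X]big1 ?addr0 => [|x Hx].
  rewrite summxE (bigD1 y0) //= [X in _ + X]big1 ?addr0 => [|y Hy].
    by rewrite mxE /sw mxtens_indexK /= eqxx andbT.
  by rewrite mxE idx_eq xpair_eqE eqxx [y0 == y]eq_sym (negbTE Hy) /= andbF.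
rewrite summxE big1 // => y _.
by rewrite mxE idx_eq xpair_eqE [x0 == x]eq_sym (negbTE Hx) andbF.
Qed.

Lemma oracle_adj : adjmx (oracle C f) = oracle C f.
Proof.
apply/matrixP => a b; rewrite !mxE !oracleE conjC_nat.
have -> : (b == sw a) = (a == sw b) by apply/eqP/eqP => ->; rewrite swK.
by [].
Qed.

Lemma oracle_sq : oracle C f *m oracle C f = 1%:M.
Proof.
apply/matrixP => a b; rewrite !mxE (bigD1 (sw b)) //= big1 ?addr0.
  by rewrite !oracleE swK eqxx mulr1.
by move=> k kb; rewrite !oracleE (negbTE kb) mulr0.
Qed.

Lemma oracle_unitary : unitary_mx (oracle C f).
Proof. by rewrite /unitary_mx oracle_adj oracle_sq. Qed.

End Orc.
Arguments sw {M} f k.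
Arguments swK {M} f.
Arguments oracleE {C M} f a b.
Arguments oracle_unitary {C M} f.


Section Vec.
Variables (C : numClosedFieldType) (M : nat) (hM : (0 < M)%N).

Let c : C := sqrtC (M%:R^-1).
Let phi : 'cV[C]_(M * 2) := \col_k (c * ((mxtens_unindex k).2 == 0)%:R).
Let psi : 'cV[C]_(M * 2 * 1) := phi *t (1%:M : 'M[C]_1).

Lemma ord1_eq (x y : 'I_1) : x = y.
Proof. by rewrite (ord1 x) (ord1 y). Qed.

Lemma psiE k : psi k 0 = phi (mxtens_unindex k).1 0.
Proof.
rewrite /psi mxE.
rewrite [(mxtens_unindex (0 : 'I_(1*1))).1](ord1_eq _ 0).
rewrite [(mxtens_unindex (0 : 'I_(1*1))).2](ord1_eq _ ((mxtens_unindex k).2)).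
by rewrite !mxE eqxx mulr1.
Qed.

Lemma Mne0 : (M%:R : C) != 0.
Proof. by rewrite pnatr_eq0 -lt0n. Qed.

Lemma c_ne0 : c != 0.
Proof. by rewrite sqrtC_eq0 invr_eq0 Mne0. Qed.

Lemma normc2 : `|c| ^+ 2 = M%:R^-1.
Proof. by rewrite -normrX sqrtCK normfV normr_nat. Qed.

Lemma psi_unit : unit_vec psi.
Proof.
rewrite /unit_vec.
have -> : \sum_(k < M * 2 * 1) `|psi k 0| ^+ 2 =
   \sum_(k < M * 2 * 1) ((fun x => `|phi x 0| ^+ 2) (mxtens_unindex k).1 *
                       (fun _ : 'I_1 => 1) (mxtens_unindex k).2).
  by apply: eq_bigr => k _; rewrite psiE mulr1.
rewrite -(mulr_sum (fun x => `|phi x 0| ^+ 2) (fun _ : 'I_1 => 1)) big_ord1 mulr1.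
have -> : \sum_(i < M * 2) `|phi i 0| ^+ 2 =
    \sum_(i < M * 2) ((fun _ : 'I_M => `|c| ^+ 2) (mxtens_unindex i).1 *
                      (fun y : 'I_2 => (y == 0)%:R) (mxtens_unindex i).2).
  apply: eq_bigr => k _; rewrite mxE normrM exprMn /=.
  by case: (_ == _); rewrite ?normr1 ?normr0 ?expr1n ?expr0n.
rewrite -(mulr_sum (fun _ : 'I_M => `|c| ^+ 2) (fun y : 'I_2 => (y == 0)%:R)) sumr_const card_ord normc2 big_ord_recl big_ord1 /=.
by rewrite addr0 mulr1 -[M%:R^-1 *+ M]mulr_natr mulVf ?Mne0.
Qed.

Lemma vecE (W : 'M[C]_(M * 2)) k :
  ((W *t (1%:M : 'M[C]_1)) *m psi) (mxtens_index (k, 0)) 0 = (W *m phi) k 0.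
Proof.
have E := tensmx_mul W (1%:M : 'M[C]_1) phi (1%:M : 'M[C]_1).
have := congr1 (fun A : 'M[C]_(M * 2 * 1, 1 * 1) => A (mxtens_index (k, 0)) (mxtens_index ((0 : 'I_1), (0 : 'I_1)))) E.
rewrite /= tensmxE mul1mx [(1%:M : 'M[C]_1) _ _]mxE eqxx mulr1 => <-.
by congr (_ _ _); apply/val_inj.
Qed.

Lemma orcphi (f : 'I_M -> 'I_2) k : (oracle C f *m phi) k 0 = phi (sw f k) 0.
Proof.
rewrite mxE (bigD1 (sw f k)) //= big1 ?addr0.
  by rewrite oracleE swK eqxx mul1r.
move=> b bk; rewrite oracleE.
have -> : (k == sw f b) = false.
  by apply/eqP => e; move: bk; rewrite e swK eqxx.
by rewrite mul0r.
Qed.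

Lemma lin_indep_helper K n (v : 'I_K -> 'cV[C]_n) (b : 'I_n -> 'I_K -> C) :
  (forall j i, \sum_k v j k 0 * b k i = (j == i)%:R) -> lin_indep v.
Proof.
move=> H; apply/row_freeP; exists (\matrix_(k, i) b k i).
apply/matrixP => j i; rewrite !mxE -H; apply: eq_bigr => k _; rewrite !mxE.
by [].
Qed.

Lemma grover_unamb : unamb_dist (fun j : 'I_M => oracle C (grover j)).
Proof.
split; first by move=> j; apply: oracle_unitary.
exists 1%N, psi; split; first exact: psi_unit.
apply: (@lin_indep_helper _ _ _ (fun k i =>
   (k == mxtens_index (mxtens_index (i, 1), 0))%:R * c^-1)) => j i.
rewrite (bigD1 (mxtens_index (mxtens_index (i, 1), 0))) //= big1 ?addr0; last first.
  by move=> k kne; rewrite (negbTE kne) mul0r mulr0.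
rewrite eqxx mul1r vecE orcphi /sw mxtens_indexK mxE mxtens_indexK /=.
rewrite /grover; case: (i =P j) => [->|ij].
  by rewrite eqxx /= mulr1 mulfV ?c_ne0.
rewrite (introF eqP (nesym ij)) /= mulr0 mul0r //.
Qed.

End Vec.


Lemma det_aIbJ (R : comNzRingType) (n : nat) (a b : R) :
  \det (\matrix_(i, j < n.+1) (a *+ (i == j) + b)) = (a + n.+1%:R * b) * a ^+ n.
Proof.
set G := \matrix_(i, j) _.
pose P : 'M[R]_n.+1 := \matrix_(i, j) ((i == j)%:R - ((j == ord0) && (i != ord0))%:R).
pose Q : 'M[R]_n.+1 := \matrix_(i, j) ((i == j)%:R + ((j == ord0) && (i != ord0))%:R).
have ltne : forall i j : 'I_n.+1, (i < j)%N -> (i == j) = false.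
  by move=> i j lij; apply/eqP => e; move: lij; rewrite e ltnn.
have ltj0 : forall i j : 'I_n.+1, (i < j)%N -> (j == ord0) = false.
  by move=> i j lij; apply/eqP => e; move: lij; rewrite e.
have dP : \det P = 1.
  rewrite det_trig; last first.
    apply/forallP => i; apply/forallP => j; apply/implyP => lij.
    by rewrite !mxE (ltne _ _ lij) (ltj0 _ _ lij) subr0.
  by rewrite big1 // => i _; rewrite !mxE eqxx andbN subr0.
have dQ : \det Q = 1.
  rewrite det_trig; last first.
    apply/forallP => i; apply/forallP => j; apply/implyP => lij.
    by rewrite !mxE (ltne _ _ lij) (ltj0 _ _ lij) addr0.
  by rewrite big1 // => i _; rewrite !mxE eqxx andbN addr0.
have GQ : forall i j, (G *m Q) i j = if j == ord0 then a + n.+1%:R * b else G i j.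
  move=> i j; rewrite !mxE.
  case: (j =P ord0) => [->|j0].
    have h1 : forall k : 'I_n.+1, ((k == ord0)%:R + (k != ord0)%:R : R) = 1.
      by move=> k; case: (k == ord0); rewrite /= ?addr0 ?add0r.
    under eq_bigr => k _ do rewrite !mxE eqxx /= h1 mulr1.
    rewrite big_split /= sumr_const card_ord -mulr_natl; congr (_ + _).
    rewrite (bigD1 i) //= eqxx big1 ?addr0 // => k ki.
    by rewrite eq_sym (negbTE ki).
  by rewrite mulr1 mulr_natl.
  rewrite (bigD1 j) //= big1 ?addr0.
    by rewrite !mxE eqxx (introF eqP j0) andFb addr0 mulr1.
  by move=> k kj; rewrite !mxE (introF eqP j0) (negbTE kj) /= addr0 mulr0.
set Y := G *m Q.
have TE : forall i j, (P *m Y) i j = Y i j - (i != ord0)%:R * Y ord0 j.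
  move=> i j; rewrite mxE.
  under eq_bigr => k _ do rewrite mxE mulrBl.
  rewrite sumrB (bigD1 i) //= (eqxx i) mul1r big1 ?addr0; last first.
    by move=> k ki; rewrite eq_sym (negbTE ki) mul0r.
  rewrite (bigD1 ord0) //= big1 ?addr0 //.
  by move=> k k0; rewrite (negbTE k0) mul0r.
have -> : \det G = \det (P *m Y) by rewrite /Y !det_mulmx dP dQ mul1r mulr1.
rewrite -det_tr det_trig; last first.
  apply/forallP => i; apply/forallP => j; apply/implyP => lij.
  rewrite mxE TE (ltj0 _ _ lij) /= mul1r !GQ.
  case: ifP => [_|i0]; first by rewrite subrr.
  rewrite !mxE [j == i]eq_sym (ltne _ _ lij) [ord0 == i]eq_sym i0.
  by rewrite subrr.
rewrite big_ord_recl mxE TE eqxx /= mul0r subr0 GQ eqxx; congr (_ * _).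
rewrite -[in RHS](card_ord n) -prodr_const; apply: eq_bigr => k _.
rewrite mxE TE /= mul1r !GQ /= !mxE eqxx /=.
by rewrite mulr1n mulr0n add0r addrK.
Qed.

Lemma gramE (M : nat) (i j : 'I_M) :
  gram_count (fun j : 'I_M => grover j) i j = 2 *+ (i == j) + (M%:Z - 2).
Proof.
rewrite mxE; case: (i =P j) => [<-|ij].
  have -> : [set x | grover i x == grover i x] = setT by apply/setP => x; rewrite !inE eqxx.
  by rewrite cardsT card_ord /= addrC subrK.
have -> : [set x | grover i x == grover j x] = ~: [set i; j].
  apply/setP => x; rewrite !inE /grover.
  case: (x =P i) => xi; case: (x =P j) => xj //=.
  by case: ij; rewrite -xi -xj.
have H := cardsC [set i; j]; rewrite cards2 (introF eqP ij) card_ord in H.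
rewrite -[in RHS]H /= PoszD; ring.
Qed.

Lemma gram_det (M : nat) (hM : (1 <= M)%N) :
  \det (gram_count (fun j : 'I_M => grover j)) = (2 ^ (M - 1) * ((M - 1) ^ 2 + 1))%:Z.
Proof.
case: M hM => [//|n] _.
have -> : gram_count (fun j : 'I_n.+1 => grover j) =
   \matrix_(i, j) (2 *+ (i == j) + (n.+1%:Z - 2)).
  by apply/matrixP => i j; rewrite gramE mxE.
rewrite det_aIbJ subn1 /= PoszM PoszD -!natz !natrX.
rewrite [n.+1%:R]natz; ring.
Qed.

Theorem mainTheorem6 (C : numClosedFieldType) (M : nat) (hM : (1 <= M)%N) :
  unamb_dist (fun j : 'I_M => oracle C (grover j)) /\
  \det (gram_count (fun j : 'I_M => grover j)) =
    (2 ^ (M - 1) * ((M - 1) ^ 2 + 1))%:Z /\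
  0 < \det (gram_count (fun j : 'I_M => grover j)).
Proof.
split; first exact: (@grover_unamb C M hM).
split; first exact: gram_det.
by rewrite gram_det // ltz_nat muln_gt0 expn_gt0 addn1.
Qed.
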